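(* Let $\mathcal{F}_c^=$ and $\mathcal{S}_c^=$ be as defined in the context. Then $\operatorname{conv}(\mathcal{F}_c^=)=\operatorname{proj}_{(z,\mathbf{x})}\operatorname{conv}(\mathcal{S}_c^=)$.
   Context: Let $m\ge1$, $M=\{1,\dots,m\}$, $p\in\{1,\dots,m\}$, and $h_1\ge h_2\ge\dots\ge h_m\ge0$. The mixing set with a cardinality constraint is $\mathcal{F}_c^==\{(z,\mathbf{x})\in\mathbb{R}_+\times\{0,1\}^m : x_i=0\Rightarrow z\ge h_i\ \forall i\in M,\ \mathbf{1}^\top\mathbf{x}\le p\}$. Let $\Xi_c^==\{(z,\mathbf{x})\in\mathbb{R}_+\times\mathbb{R}^m_+ : \mathbf{x}\le\mathbf{1},\ \mathbf{1}^\top\mathbf{x}\le p\}$ and $\Delta_m=\{\mathbf{y}\in\mathbb{Z}^m_+:\mathbf{1}^\top\mathbf{y}\le1\}$. The set $\mathcal{S}_c^=$ is the set of $(z,\mathbf{x};\mathbf{y})\in\Xi_c^=\times\Delta_m$ satisfying: $(1-x_i)(1-\mathbf{1}^\top\mathbf{y})\ge0$ and $-(1-x_i)(1-\mathbf{1}^\top\mathbf{y})\ge0$ for all $i\in M$; $zy_i-h_iy_i\ge0$ for all $i\in M$; $-x_iy_i\ge0$ for all $i\in M$; $-(1-x_i)y_j\ge0$ for all $i,j\in M$ with $i<j$. *)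

(* Defs.v *)
From HB Require Import structures.
From mathcomp Require Import all_boot all_order all_algebra.
Set Implicit Arguments. Unset Strict Implicit. Unset Printing Implicit Defensive.
Import Order.TTheory GRing.Theory Num.Theory.
Local Open Scope ring_scope.

Definition conv (R : numDomainType) (V : lmodType R) (S : V -> Prop) : V -> Prop :=
  fun v => exists (n : nat) (w : 'I_n -> R) (pt : 'I_n -> V),
    (forall k, 0 <= w k) /\ \sum_(k < n) w k = 1 /\
    (forall k, S (pt k)) /\ v = \sum_(k < n) w k *: pt k.

Definition pt_zx (R : numDomainType) (m : nat) := (R^o * 'rV[R]_m)%type.
Definition pt_zxy (R : numDomainType) (m : nat) := (R^o * 'rV[R]_m * 'rV[R]_m)%type.

Definition Fc (R : numDomainType) (m p : nat) (h : 'I_m -> R) : pt_zx R m -> Prop :=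
  fun zx => let (z, x) := zx in
    0 <= z /\
    (forall i, x 0 i = 0 \/ x 0 i = 1) /\
    (forall i, x 0 i = 0 -> h i <= z) /\
    \sum_(i < m) x 0 i <= p%:R.

Definition Xic (R : numDomainType) (m p : nat) (z : R) (x : 'rV[R]_m) : Prop :=
  0 <= z /\ (forall i, 0 <= x 0 i) /\ (forall i, x 0 i <= 1) /\
  \sum_(i < m) x 0 i <= p%:R.

Definition Deltam (R : numDomainType) (m : nat) (y : 'rV[R]_m) : Prop :=
  (forall i, exists k : nat, y 0 i = k%:R) /\ \sum_(i < m) y 0 i <= 1.

Definition Sc (R : numDomainType) (m p : nat) (h : 'I_m -> R) : pt_zxy R m -> Prop :=
  fun zxy => let: (z, x, y) := zxy in
    Xic p z x /\ Deltam y /\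
    (forall i, (1 - x 0 i) * (1 - \sum_(j < m) y 0 j) >= 0) /\
    (forall i, - ((1 - x 0 i) * (1 - \sum_(j < m) y 0 j)) >= 0) /\
    (forall i, z * y 0 i - h i * y 0 i >= 0) /\
    (forall i, - (x 0 i * y 0 i) >= 0) /\
    (forall i j : 'I_m, (i < j)%N -> - ((1 - x 0 i) * y 0 j) >= 0).

(* Main.v *)
Require Import Defs.
From mathcomp Require Import all_boot all_order all_algebra.
From mathcomp Require Import ring lra.
Import Order.TTheory GRing.Theory Num.Theory.
Local Open Scope ring_scope.

Lemma conv_sub (R : numDomainType) (V : lmodType R) (S : V -> Prop) v :
  S v -> conv S v.
Proof.
move=> Sv; exists 1%N, (fun _ => 1), (fun _ => v).
by rewrite big_ord1 big_ord1 scale1r.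
Qed.

Lemma conv2 (R : numDomainType) (V : lmodType R) (S : V -> Prop) u v a :
  0 <= a -> a <= 1 -> conv S u -> conv S v -> conv S (a *: u + (1 - a) *: v).
Proof.
move=> a0 a1 [n1 [w1 [p1 [w1p [w1s [p1S ->]]]]]] [n2 [w2 [p2 [w2p [w2s [p2S ->]]]]]].
have sl : forall i : 'I_n1, split (lshift n2 i) = inl i := fun i => unsplitK (inl i).
have sr : forall i : 'I_n2, split (rshift n1 i) = inr i := fun i => unsplitK (inr i).
exists (n1 + n2)%N,
  (fun k => match split k with inl i => a * w1 i | inr j => (1 - a) * w2 j end),
  (fun k => match split k with inl i => p1 i | inr j => p2 j end).
split; [|split; [|split]].
- move=> k; case: split => i; apply: mulr_ge0 => //; by rewrite subr_ge0.
- rewrite big_split_ord /=.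
  rewrite (eq_bigr (fun i => a * w1 i)); last by move=> i _; rewrite (sl i).
  rewrite [X in _ + X](eq_bigr (fun i => (1 - a) * w2 i)); last by move=> i _; rewrite (sr i).
  by rewrite -!mulr_sumr w1s w2s !mulr1 addrC subrK.
- by move=> k; case: split.
- symmetry; rewrite big_split_ord /=.
  rewrite (eq_bigr (fun i => a * w1 i *: p1 i)); last by move=> i _; rewrite (sl i).
  rewrite [X in _ + X](eq_bigr (fun i => (1 - a) * w2 i *: p2 i)); last by move=> i _; rewrite (sr i).
  rewrite !scaler_sumr; congr (_ + _); apply: eq_bigr => i _; by rewrite scalerA.
Qed.

Lemma conv_sum (R : realFieldType) (V : lmodType R) (S : V -> Prop) n :
  forall (w : 'I_n -> R) (pt : 'I_n -> V),
  (forall k, 0 <= w k) -> \sum_k w k = 1 -> (forall k, conv S (pt k)) ->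
  conv S (\sum_k w k *: pt k).
Proof.
elim: n => [|n IH] w pt w0 w1 pS.
  by move: w1; rewrite big_ord0 => /eqP; rewrite eq_sym oner_eq0.
move: w1; rewrite !big_ord_recr /=.
set s := \sum_(i < n) w (widen_ord (leqnSn n) i) => ws.
have s0 : 0 <= s by apply: sumr_ge0.
have [sz|sp] := eqVneq s 0.
  have z := psumr_eq0P (fun i _ => w0 _) sz.
  rewrite big1 ?add0r; last by move=> i _; rewrite z // scale0r.
  have -> : w ord_max = 1 by rewrite -ws sz add0r.
  by rewrite scale1r.
have spos : 0 < s by rewrite lt_def sp s0.
have -> : w ord_max = 1 - s by rewrite -ws addrAC subrr add0r.
have -> : \sum_(i < n) w (widen_ord (leqnSn n) i) *: pt (widen_ord (leqnSn n) i)
   = s *: \sum_(i < n) (w (widen_ord (leqnSn n) i) / s) *: pt (widen_ord (leqnSn n) i).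
  rewrite scaler_sumr; apply: eq_bigr => i _; rewrite scalerA; congr (_ *: _).
  by rewrite mulrC -mulrA mulVf ?mulr1.
apply: conv2 => //.
- by rewrite -ws lerDl.
- apply: IH => //.
  + by move=> k; apply: divr_ge0.
  + by rewrite -mulr_suml mulfV.
Qed.

Definition fr {R : realFieldType} {m : nat} (x : 'rV[R]_m) : pred 'I_m :=
  [pred k | (0 < x 0 k) && (x 0 k < 1)].

Definition upd2 {R : realFieldType} {m : nat} (x : 'rV[R]_m) (i j : 'I_m) (a b : R) : 'rV[R]_m :=
  \row_k (if k == i then a else if k == j then b else x 0 k).

Lemma upd2E {R : realFieldType} {m : nat} (x : 'rV[R]_m) i j a b k :
  upd2 x i j a b 0 k = if k == i then a else if k == j then b else x 0 k.
Proof. by rewrite mxE. Qed.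

Lemma sum_upd2 {R : realFieldType} {m : nat} (x : 'rV[R]_m) i j a b : j != i ->
  \sum_k upd2 x i j a b 0 k = \sum_k x 0 k + (a - x 0 i) + (b - x 0 j).
Proof.
move=> ji.
rewrite (bigD1 i) // (bigD1 j) //= [in RHS](bigD1 i) // [in RHS](bigD1 j) //=.
rewrite !upd2E eqxx (negbTE ji) eqxx.
rewrite (eq_bigr (fun k => x 0 k)); last first.
  by move=> k /andP [ki kj]; rewrite upd2E (negbTE ki) (negbTE kj).
set S := \sum_(k | _) _. ring.
Qed.

Definition good {R : realFieldType} {m : nat} p (h : 'I_m -> R) (z : R) (x : 'rV[R]_m) :=
  [/\ forall i, 0 <= x 0 i, forall i, x 0 i <= 1, \sum_i x 0 i <= p%:R &
      forall i, x 0 i != 1 -> h i <= z].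

Lemma binary_F {R : realFieldType} {m : nat} p (h : 'I_m -> R) z x :
  0 <= z -> good p h z x -> (forall k, ~~ fr x k) -> Fc p h ((z, x) : pt_zx R m).
Proof.
move=> z0 [x0 x1 xs xh] nf.
have bin : forall i, x 0 i = 0 \/ x 0 i = 1.
  move=> i; have := nf i; rewrite /fr inE negb_and -!leNgt.
  case/orP => H.
    by left; apply/le_anti; rewrite H x0.
  by right; apply/le_anti; rewrite H x1.
split; first done. split; first exact: bin. split; last done.
move=> i xi0; apply: xh; by rewrite xi0 eq_sym oner_eq0.
Qed.

Lemma card_fr_lt {R : realFieldType} {m : nat} (x y : 'rV[R]_m) l :
  (forall k, k != l -> fr y k -> fr x k) -> ~~ fr y l -> fr x l ->
  (#|fr y| < #|fr x|)%N.
Proof.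
move=> sub nyl xl.
rewrite [X in (_ < X)%N](cardD1 l) [l \in _]xl add1n ltnS.
apply: subset_leq_card; apply/subsetP => k.
rewrite !inE => yk; have kl : k != l by apply: contraNneq nyl => <-.
by rewrite kl; exact: (sub k kl yk).
Qed.

Lemma bin_of {R : realFieldType} (v : R) : 0 <= v -> v <= 1 -> ~~ ((0 < v) && (v < 1)) ->
  v = 0 \/ v = 1.
Proof.
move=> v0 v1; rewrite negb_and -!leNgt; case/orP => H.
  by left; apply/le_anti; rewrite H v0.
by right; apply/le_anti; rewrite H v1.
Qed.

Lemma sum_upd1 {R : realFieldType} {m : nat} (x : 'rV[R]_m) i a :
  \sum_k upd2 x i i a a 0 k = \sum_k x 0 k + (a - x 0 i).
Proof.
rewrite (bigD1 i) //= [in RHS](bigD1 i) //= upd2E eqxx.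
rewrite (eq_bigr (fun k => x 0 k)); last first.
  by move=> k ki; rewrite upd2E (negbTE ki).
set S := \sum_(k | _) _. ring.
Qed.

Lemma comb_step {R : realFieldType} {m : nat} (S : pt_zx R m -> Prop) z
  (x x1 x2 : 'rV[R]_m) lam :
  0 <= lam -> lam <= 1 ->
  (forall k, x 0 k = lam * x1 0 k + (1 - lam) * x2 0 k) ->
  conv S ((z, x1) : pt_zx R m) -> conv S ((z, x2) : pt_zx R m) ->
  conv S ((z, x) : pt_zx R m).
Proof.
move=> l0 l1 E c1 c2.
have -> : ((z, x) : pt_zx R m) =
   lam *: ((z, x1) : pt_zx R m) + (1 - lam) *: ((z, x2) : pt_zx R m).
  change ((z, x) = (lam * z + (1 - lam) * z, lam *: x1 + (1 - lam) *: x2)).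
  congr (_, _); first ring.
  by apply/rowP => k; rewrite !mxE E.
exact: conv2.
Qed.

Lemma good_upd2 {R : realFieldType} {m : nat} p (h : 'I_m -> R) z (x : 'rV[R]_m) i j a b :
  good p h z x -> fr x i -> fr x j -> 0 <= a -> a <= 1 -> 0 <= b -> b <= 1 ->
  \sum_k upd2 x i j a b 0 k <= p%:R -> good p h z (upd2 x i j a b).
Proof.
move=> [x0 x1 xs xh]; rewrite /fr /= => /andP [_ fi] /andP [_ fj] a0 a1 b0 b1 s.
split => // k; rewrite upd2E.
- by case: ifP => _ //; case: ifP.
- by case: ifP => _ //; case: ifP.
- case: ifP => [/eqP -> _|_]; first by apply: xh; rewrite lt_eqF.
  case: ifP => [/eqP -> _|_]; first by apply: xh; rewrite lt_eqF.
  exact: xh.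
Qed.

Lemma card_upd2 {R : realFieldType} {m : nat} (x : 'rV[R]_m) i j a b :
  fr x i -> fr x j -> j != i -> [\/ a = 0, a = 1, b = 0 | b = 1] ->
  (#|fr (upd2 x i j a b)| < #|fr x|)%N.
Proof.
move=> fi fj ji H.
have sub : forall a0 b0 l k, k != l -> fr (upd2 x i j a0 b0) k -> fr x k.
  move=> a0 b0 l k _; rewrite {1}/fr /= upd2E.
  by case: ifP => [/eqP -> //|_]; case: ifP => [/eqP -> //|_].
case: H => ->.
- apply: (@card_fr_lt _ _ _ _ i) => //; first exact: sub.
  by rewrite /fr /= upd2E eqxx ltxx.
- apply: (@card_fr_lt _ _ _ _ i) => //; first exact: sub.
  by rewrite /fr /= upd2E eqxx ltxx andbF.
- apply: (@card_fr_lt _ _ _ _ j) => //; first exact: sub.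
  by rewrite /fr /= upd2E eqxx (negbTE ji) ltxx.
- apply: (@card_fr_lt _ _ _ _ j) => //; first exact: sub.
  by rewrite /fr /= upd2E eqxx (negbTE ji) ltxx andbF.
Qed.

Lemma decomp {R : realFieldType} {m : nat} p (h : 'I_m -> R) z (z0 : 0 <= z) N :
  forall x : 'rV[R]_m, (#|fr x| <= N)%N -> good p h z x ->
  conv (Fc p h) ((z, x) : pt_zx R m).
Proof.
elim: N => [|N IH] x cx gx.
  apply: conv_sub; apply: binary_F => // k; apply/negP => fk.
  move: cx; rewrite leqn0 => /eqP/card0_eq/(_ k).
  by rewrite (_ : k \in fr x = true) //; exact: fk.
have [c0|cpos] := posnP #|fr x|.
  apply: conv_sub; apply: binary_F => // k; apply/negP => fk.
  move/card0_eq: c0 => /(_ k).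
  by rewrite (_ : k \in fr x = true) //; exact: fk.
case/card_gt0P: cpos => i fi.
have [x0 x1 xs xh] := gx.
have /andP [xi0 xi1] : (0 < x 0 i) && (x 0 i < 1) := fi.
case: (pickP (fun j => (j != i) && fr x j)) => [j /andP [ji fj] | none].
  have /andP [xj0 xj1] : (0 < x 0 j) && (x 0 j < 1) := fj.
  have IH' : forall a b, 0 <= a -> a <= 1 -> 0 <= b -> b <= 1 ->
      a + b = x 0 i + x 0 j -> [\/ a = 0, a = 1, b = 0 | b = 1] ->
      conv (Fc p h) ((z, upd2 x i j a b) : pt_zx R m).
    move=> a b a0 a1 b0 b1 ab H; apply: IH.
      rewrite -ltnS; apply: leq_trans cx; exact: card_upd2.
    apply: good_upd2 => //; rewrite sum_upd2 //; lra.
  have [Hs|Hs] := lerP (x 0 i + x 0 j) 1.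
    have sne : x 0 i + x 0 j != 0 by apply/eqP => H; lra.
    have sp : 0 < x 0 i + x 0 j by lra.
    apply: (@comb_step _ _ _ z x (upd2 x i j (x 0 i + x 0 j) 0)
       (upd2 x i j 0 (x 0 i + x 0 j)) (x 0 i / (x 0 i + x 0 j))).
    - by apply: divr_ge0; lra.
    - by rewrite ler_pdivrMr // mul1r; lra.
    - move=> k; rewrite !upd2E.
      have [->|ki] := eqVneq k i; first by field.
      have [->|kj] := eqVneq k j; first by field.
      ring.
    - apply: IH' => //; try lra. by constructor 3.
    - apply: IH' => //; try lra. by constructor 1.
  have dp : 0 < 2 - x 0 i - x 0 j by lra.
  have dne : 2 - x 0 i - x 0 j != 0 by apply/eqP => H; lra.
  apply: (@comb_step _ _ _ z x (upd2 x i j 1 (x 0 i + x 0 j - 1))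
     (upd2 x i j (x 0 i + x 0 j - 1) 1) ((1 - x 0 j) / (2 - x 0 i - x 0 j))).
  - by apply: divr_ge0; lra.
  - by rewrite ler_pdivrMr // mul1r; lra.
  - move=> k; rewrite !upd2E.
    have [->|ki] := eqVneq k i; first by field.
    have [->|kj] := eqVneq k j; first by field.
    ring.
  - apply: IH' => //; try lra. by constructor 2.
  - apply: IH' => //; try lra. by constructor 4.
(* single fractional coordinate *)
have nf : forall k, k != i -> ~~ fr x k.
  by move=> k ki; move: (none k); rewrite ki /= => ->.
have binx : forall k, k != i -> x 0 k = (x 0 k == 1)%:R.
  move=> k ki; case: (@bin_of _ (x 0 k) (x0 k) (x1 k) (nf k ki)) => ->.
    by rewrite eq_sym oner_eq0.
  by rewrite eqxx.
set c := (\sum_(k | k != i) nat_of_bool (x 0%R k == 1%R))%N.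
have sx : \sum_k x 0 k = x 0 i + c%:R.
  rewrite (bigD1 i) //= /c natr_sum; congr (_ + _).
  by apply: eq_bigr => k ki; rewrite -binx.
have cp : (c.+1 <= p)%N.
  by rewrite -(ltr_nat R); move: xs; rewrite sx => H; lra.
have cp' : c%:R + 1 <= p%:R :> R by rewrite natr1 ler_nat.
have gb : forall a, (a = 0 \/ a = 1) -> good p h z (upd2 x i i a a).
  move=> a Ha; apply: good_upd2 => //; try by case: Ha => ->; lra.
  rewrite sum_upd1 sx; case: Ha => ->; lra.
have fb : forall a, (a = 0 \/ a = 1) -> forall k, ~~ fr (upd2 x i i a a) k.
  move=> a Ha k; rewrite /fr /= upd2E.
  case: ifP => [_|/negbT ki]; last by rewrite (negbTE ki); exact: nf k ki.
  by case: Ha => ->; rewrite ltxx ?andbF.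
apply: (@comb_step _ _ _ z x (upd2 x i i 1 1) (upd2 x i i 0 0) (x 0 i)).
- lra.
- lra.
- move=> k; rewrite !upd2E; have [->|ki] := eqVneq k i; ring.
- by apply: conv_sub; apply: binary_F => //; [apply: gb; right | apply: fb; right].
- by apply: conv_sub; apply: binary_F => //; [apply: gb; left | apply: fb; left].
Qed.

Definition yof {R : realFieldType} {m : nat} (x : 'rV[R]_m) : 'rV[R]_m :=
  \row_i (nat_of_bool ((x 0 i == 0) && [forall j : 'I_m, (j < i)%N ==> (x 0 j == 1)]))%:R.

Lemma F_S {R : realFieldType} {m : nat} p (h : 'I_m -> R) z (x : 'rV[R]_m) :
  Fc p h ((z, x) : pt_zx R m) -> Sc p h ((z, x, yof x) : pt_zxy R m).
Proof.
case=> z0 [bin [hh xs]].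
set b := fun i : 'I_m => (x 0 i == 0) && [forall j : 'I_m, (j < i)%N ==> (x 0 j == 1)].
have yE : forall i, yof x 0 i = (nat_of_bool (b i))%:R by move=> i; rewrite mxE.
have b0 : forall i, b i -> x 0 i = 0 by move=> i /andP [/eqP].
have b1 : forall i j : 'I_m, b i -> (j < i)%N -> x 0 j = 1.
  by move=> i j /andP [_ /forallP /(_ j) /implyP H] /H /eqP.
have n01 : (0 : R) <> 1 by move=> /eqP; rewrite eq_sym oner_eq0.
have bU : forall i k : 'I_m, b i -> b k -> i = k.
  move=> i k bi bk; case: (ltngtP i k) => [ik|ki|/val_inj //].
    by have := b1 _ _ bk ik; rewrite b0.
  by have := b1 _ _ bi ki; rewrite b0.
have ex0 : forall i : 'I_m, x 0 i = 0 -> exists k, b k.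
  move=> i xi.
  case: (@arg_minnP _ i (fun k => x 0 k == 0) (fun k => val k)); first by apply/eqP.
  move=> k xk kmin; exists k; apply/andP; split => //.
  apply/forallP => j; apply/implyP => jk; case: (bin j) => [xj|->//].
  have := kmin j; rewrite xj eqxx => /(_ isT); by rewrite leqNgt jk.
have sy : (\sum_i yof x 0 i = 1) \/ ((\sum_i yof x 0 i = 0) /\ forall i, x 0 i = 1).
  case: (pickP b) => [k bk | nb].
    left; rewrite (bigD1 k) //= yE bk big1 ?addr0 // => i ik.
    rewrite yE; case bi: (b i) => //.
    by move: ik; rewrite (bU _ _ bi bk) eqxx.
  right; split.
    by rewrite big1 // => i _; rewrite yE nb.
  move=> i; case: (bin i) => // xi.
  by case: (ex0 i xi) => k bk; rewrite nb in bk.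
have c : forall i, (1 - x 0 i) * (1 - \sum_j yof x 0 j) = 0.
  move=> i; case: sy => [->|[_ ->]]; by rewrite subrr ?mulr0 ?mul0r.
rewrite /Sc; split; [|split; [|split; [|split; [|split; [|split]]]]].
- split => //; split; [|split] => // i; by case: (bin i) => ->.
- split.
    by move=> i; exists (nat_of_bool (b i)); rewrite yE.
  by case: sy => [->|[-> _]].
- by move=> i; rewrite c.
- by move=> i; rewrite c oppr0.
- move=> i; rewrite yE; case bi: (b i); last by rewrite /= mulr0 mulr0 subrr.
  by rewrite /= !mulr1 subr_ge0; apply: hh; apply: b0.
- move=> i; rewrite yE; case bi: (b i); last by rewrite /= mulr0 oppr0.
  by rewrite b0 // mul0r oppr0.
- move=> i j ij; rewrite yE; case bj: (b j); last by rewrite /= mulr0 oppr0.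
  by rewrite (b1 j i) // subrr mul0r oppr0.
Qed.

Lemma S_F {R : realFieldType} {m : nat} p (h : 'I_m -> R)
  (hmono : forall i j : 'I_m, (i <= j)%N -> h j <= h i) z (x y : 'rV[R]_m) :
  Sc p h ((z, x, y) : pt_zxy R m) -> conv (Fc p h) ((z, x) : pt_zx R m).
Proof.
case=> [[z0 [x0 [x1 xs]]] [[yint ys] [c1 [c2 [c3 [c4 c5]]]]]].
apply: (@decomp _ _ p h z z0 #|fr x| x (leqnn _)).
split => // i xi1.
have e : (1 - x 0 i) * (1 - \sum_j y 0 j) = 0.
  by apply/le_anti; rewrite -oppr_ge0 c2 c1.
have xi1' : x 0 i < 1 by rewrite lt_def eq_sym xi1 x1.
have s1 : 1 - \sum_j y 0 j = 0.
  by move: e => /eqP; rewrite mulf_eq0 subr_eq0 eq_sym (negbTE xi1) /= => /eqP.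
case: (pickP (fun k => y 0 k != 0)) => [k yk | ny]; last first.
  move: s1; rewrite big1 ?subr0; first by move=> /eqP; rewrite oner_eq0.
  by move=> k _; apply/eqP; apply: negbFE; exact: ny k.
have ykp : 0 < y 0 k.
  by case: (yint k) => n yn; rewrite lt_def yk yn ler0n.
have hk : h k <= z by have := c3 k; nra.
case: (ltnP i k) => ik.
  by have := c5 i k ik; nra.
exact: le_trans (hmono _ _ ik) hk.
Qed.

Lemma sum_pair {R : numDomainType} (U W : lmodType R) n (F : 'I_n -> (U * W)%type) :
  \sum_k F k = (\sum_k (F k).1, \sum_k (F k).2).
Proof.
elim: n F => [|n IH] F; first by rewrite !big_ord0.
by rewrite !big_ord_recr /= IH.
Qed.

Theorem mainTheorem7 (R : realFieldType) (m p : nat) (h : 'I_m -> R)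
  (hm : (1 <= m)%N) (hp1 : (1 <= p)%N) (hpm : (p <= m)%N)
  (hmono : forall i j : 'I_m, (i <= j)%N -> h j <= h i)
  (hnn : forall i, 0 <= h i) :
  forall (z : R) (x : 'rV[R]_m),
    conv (Fc p h) ((z, x) : pt_zx R m) <->
    exists y : 'rV[R]_m, conv (Sc p h) ((z, x, y) : pt_zxy R m).
Proof.
move=> z x; split.
  case=> n [w [pt [w0 [w1 [pF E]]]]].
  exists (\sum_k w k *: yof (pt k).2).
  exists n, w, (fun k => ((pt k), yof (pt k).2) : pt_zxy R m).
  split; first done. split; first done. split.
    move=> k; have := pF k; case: (pt k) => [zk xk] /=; exact: F_S.
  by rewrite sum_pair /= -E.
case=> y [n [w [Q [w0 [w1 [QS E]]]]]].
have E1 : ((z, x) : pt_zx R m) = \sum_k w k *: (Q k).1.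
  have := congr1 fst E; rewrite sum_pair /= => ->.
  by apply: eq_bigr.
rewrite E1; apply: conv_sum => // k.
have := QS k; case: (Q k) => [[zk xk] yk] /=; exact: S_F.
Qed.
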